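(* Let $p$ be a prime, $q=p^r$, $m,n\ge1$, and $0\le l\le r-1$. Let $\mathscr{C}\subseteq\mathrm{GF}(q^m)^n$ be a scalable code, $\mathscr{B}$ a basis of $\mathrm{GF}(q^m)$ over $\mathrm{GF}(q)$ and $\mathscr{B}'=\{\beta_1,\ldots,\beta_m\}$ its dual basis. Then $\mathrm{Im}_{\mathscr{B}}(\mathscr{C})$ is self-orthogonal w.r.t. the Hermitian-type product $\tilde h_l(x,y)=\sum_{i=1}^{mn}x_iy_i^{p^l}$ on $\mathrm{GF}(q)^{mn}$ if and only if $$\Big(\sum_{i=1}^n x_iy_i^{p^lq^k}\Big)\Big(\sum_{j=1}^m\beta_j^{1+p^lq^k}\Big)=0$$ for all $x=(x_1,\ldots,x_n),y=(y_1,\ldots,y_n)\in\mathscr{C}$ and all $0\le k\le m-1$.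
   Context: $\mathrm{Tr}:\mathrm{GF}(q^m)\to\mathrm{GF}(q)$, $\mathrm{Tr}(a)=\sum_{i=0}^{m-1}a^{q^i}$. The dual basis of a basis $\{\gamma_1,\ldots,\gamma_m\}$ is the unique basis $\{\beta_1,\ldots,\beta_m\}$ with $\mathrm{Tr}(\gamma_i\beta_j)=\delta_{ij}$. A code $\mathscr{C}\subseteq\mathrm{GF}(q^m)^n$ is scalable if $x\in\mathscr{C}\Rightarrow\alpha x\in\mathscr{C}$ for all $\alpha\in\mathrm{GF}(q^m)$. $\mathrm{Im}_{\mathscr{B}}(\mathscr{C})=\{(\mathrm{Tr}(\beta_1x_1),\ldots,\mathrm{Tr}(\beta_1x_n),\ldots,\mathrm{Tr}(\beta_mx_1),\ldots,\mathrm{Tr}(\beta_mx_n)):x\in\mathscr{C}\}\subseteq\mathrm{GF}(q)^{mn}$. A code $D$ is self-orthogonal w.r.t. a form $g$ if $g(x,y)=0$ for all $x,y\in D$. *)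

(* Defs.v *)
From HB Require Import structures.
From mathcomp Require Import all_boot all_order all_algebra all_field.
Set Implicit Arguments. Unset Strict Implicit. Unset Printing Implicit Defensive.
Import GRing.Theory.
Local Open Scope ring_scope.

(* K plays the role of GF(q^m); GF(q) is the subfield {a | a^q = a} of K. *)

Definition in_subfield (K : finFieldType) (q : nat) (a : K) : bool := a ^+ q == a.

Definition Tr (K : finFieldType) (q m : nat) (a : K) : K :=
  \sum_(i < m) a ^+ (q ^ i).

(* gamma_1..gamma_m is a basis of K over GF(q) (K has q^m elements, so
   m GF(q)-linearly independent elements form a basis) *)
Definition is_basis (K : finFieldType) (q m : nat) (g : 'I_m -> K) : Prop :=
  forall c : 'I_m -> K, (forall i, @in_subfield K q (c i)) ->
    \sum_(i < m) c i * g i = 0 -> forall i, c i = 0.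

Definition is_dual_basis (K : finFieldType) (q m : nat) (g b : 'I_m -> K) : Prop :=
  forall i j, @Tr K q m (g i * b j) = (i == j)%:R.

Definition scalable_code (K : finFieldType) (n : nat) (C : {set 'rV[K]_n}) : Prop :=
  forall (a : K) (x : 'rV[K]_n), x \in C -> a *: x \in C.

(* the image map: x |-> (Tr(b_1 x_1),...,Tr(b_1 x_n),...,Tr(b_m x_1),...,Tr(b_m x_n));
   mxvec flattens an m x n matrix in row-major order. *)
Definition Im_vec (K : finFieldType) (q m n : nat) (b : 'I_m -> K) (x : 'rV[K]_n)
  : 'rV[K]_(m * n) :=
  mxvec (\matrix_(j < m, i < n) @Tr K q m (b j * x 0 i)).

Definition Im_code (K : finFieldType) (q m n : nat) (b : 'I_m -> K)
  (C : {set 'rV[K]_n}) : 'rV[K]_(m * n) -> Prop :=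
  fun u => exists2 x, x \in C & u = @Im_vec K q m n b x.

Definition htilde (K : finFieldType) (p l N : nat) (x y : 'rV[K]_N) : K :=
  \sum_(i < N) x 0 i * (y 0 i) ^+ (p ^ l).

Definition self_orthogonal (K : finFieldType) (N : nat)
  (g : 'rV[K]_N -> 'rV[K]_N -> K) (D : 'rV[K]_N -> Prop) : Prop :=
  forall x y, D x -> D y -> g x y = 0.

(* Main.v *)
Require Import Defs.
From HB Require Import structures.
From mathcomp Require Import all_boot all_order all_algebra all_field.
From mathcomp Require Import zify.
Import GRing.Theory.
Local Open Scope ring_scope.

Lemma frobD (K : fieldType) p (hp : p \in [pchar K]) t (x y : K) :
  (x + y) ^+ (p ^ t) = x ^+ (p ^ t) + y ^+ (p ^ t).
Proof.
apply: exprDn_pchar; rewrite pnatX (eq_pnat _ (pcharf_eq hp)) pnat_id //.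
exact: pcharf_prime hp.
Qed.

Lemma frob_sum (K : fieldType) p (hp : p \in [pchar K]) t (I : Type) (r : seq I) (F : I -> K) :
  (\sum_(i <- r) F i) ^+ (p ^ t) = \sum_(i <- r) F i ^+ (p ^ t).
Proof.
elim: r => [|a r IH]; first by rewrite !big_nil expr0n expn_eq0 eqn0Ngt (prime_gt0 (pcharf_prime hp)).
by rewrite !big_cons frobD // IH.
Qed.

Lemma poly_lemma (K : finFieldType) m (d : 'I_m -> K) (e : 'I_m -> nat) :
  injective e -> (forall k, (e k < #|K|)%N) ->
  (forall c, \sum_k d k * c ^+ (e k) = 0) -> forall k, d k = 0.
Proof.
move=> einj elt H k.
pose P := \poly_(i < #|K|) (\sum_j (e j == i)%:R * d j).
have hP : forall c, P.[c] = 0.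
  move=> c; rewrite horner_poly -[RHS](H c).
  rewrite (eq_bigr (fun i : 'I_#|K| => \sum_j (e j == i)%:R * d j * c ^+ i)); last first.
    by move=> i _; rewrite mulr_suml.
  rewrite exchange_big /=; apply: eq_bigr => j _.
  rewrite (bigD1 (Ordinal (elt j))) //= eqxx mul1r big1 ?addr0 // => i hi.
  case: eqP => [ei|]; last by rewrite mul0r mul0r.
  by case/eqP: hi; apply: val_inj => /=.
have P0 : P = 0.
  apply/eqP; apply: contraT => Pn0.
  have hall : all (root P) (enum K) by apply/allP => c _; rewrite /root hP.
  have := max_poly_roots Pn0 hall (enum_uniq _).
  by rewrite -cardE => /leq_trans/(_ (size_poly _ _)); rewrite ltnn.
have := congr1 (fun q : {poly K} => q`_(e k)) P0.
rewrite coef_poly elt coef0 (bigD1 k) //= eqxx mul1r big1 ?addr0 // => j hj.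
by case: eqP => [/einj ejk|]; [rewrite ejk eqxx in hj | rewrite mul0r].
Qed.

Section Main.
Variables (K : finFieldType) (p r m n l : nat).
Hypothesis hp : p \in [pchar K].
Hypothesis hfix : forall z : K, z ^+ ((p ^ r) ^ m) = z.

Local Notation TR := (@Tr K (p ^ r) m).

Lemma QX k : ((p ^ r) ^ k = p ^ (r * k))%N.
Proof. by rewrite expnM. Qed.

Lemma TrQ z : TR z ^+ (p ^ r) = TR z.
Proof.
rewrite /Tr frob_sum //.
under eq_bigr do rewrite -exprM -expnSr.
case: m hfix => [|m'] hf; first by rewrite !big_ord0.
rewrite big_ord_recr big_ord_recl /= hf expn0 expr1 addrC; congr (_ + _).
Qed.

Lemma TrQs s z : TR z ^+ ((p ^ r) ^ s) = TR z.
Proof. by elim: s => [|s IH]; rewrite ?expr1 // expnSr exprM IH TrQ. Qed.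

Lemma fixQs (w : K) s : w ^+ (p ^ r) = w -> w ^+ ((p ^ r) ^ s) = w.
Proof. by move=> hw; elim: s => [|s IH]; rewrite ?expr1 // expnSr exprM IH hw. Qed.

Lemma Tr_scal (z w : K) : w ^+ (p ^ r) = w ->
  TR (z * w) = TR z * w.
Proof.
move=> hw; rewrite /Tr mulr_suml; apply: eq_bigr => i _.
by rewrite exprMn (fixQs w i hw).
Qed.

Lemma Tr_sum (I : finType) (F : I -> K) :
  TR (\sum_i F i) = \sum_i TR (F i).
Proof.
rewrite /Tr exchange_big /=; apply: eq_bigr => k _.
by rewrite QX frob_sum.
Qed.

Variable b : 'I_m -> K.

Definition EE (x y : 'rV[K]_n) : K :=
  \sum_(k < m) (\sum_(i < n) x 0 i * (y 0 i) ^+ (p ^ l * (p ^ r) ^ k)) *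
     (\sum_(j < m) (b j) ^+ (1 + p ^ l * (p ^ r) ^ k)).

Lemma htilde_mxvec (M N : 'M[K]_(m, n)) :
  @htilde K p l (m * n) (mxvec M) (mxvec N) =
  \sum_(j < m) \sum_(i < n) M j i * N j i ^+ (p ^ l).
Proof.
rewrite /htilde (reindex _ (curry_mxvec_bij m n)) /= pair_big /=.
by apply: eq_bigr => -[j i] _ /=; rewrite !mxvecE.
Qed.

Lemma main_id (x y : 'rV[K]_n) :
  @htilde K p l (m * n) (@Im_vec K (p ^ r) m n b x) (@Im_vec K (p ^ r) m n b y)
  = TR (EE x y).
Proof.
rewrite /Im_vec htilde_mxvec.
have -> : \sum_(j < m) \sum_(i < n)
   (\matrix_(j0 < m, i0 < n) TR (b j0 * x 0 i0)) j i *
   (\matrix_(j0 < m, i0 < n) TR (b j0 * y 0 i0)) j i ^+ (p ^ l) =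
   \sum_(j < m) \sum_(i < n) TR (b j * x 0 i * TR (b j * y 0 i) ^+ (p ^ l)).
  apply: eq_bigr => j _; apply: eq_bigr => i _; rewrite !mxE (Tr_scal (b j * x 0 i)) //.
  by rewrite -exprM mulnC exprM TrQ.
under eq_bigr do rewrite -Tr_sum.
rewrite -Tr_sum.
congr TR.
rewrite /EE /Tr.
under eq_bigr => j _ do under eq_bigr => i _ do rewrite frob_sum // mulr_sumr.
under [RHS]eq_bigr => k _ do rewrite mulr_suml.
under [RHS]eq_bigr => k _ do under eq_bigr => i _ do rewrite mulr_sumr.
under eq_bigr => j _ do rewrite exchange_big /=.
rewrite exchange_big /=.
apply: eq_bigr => k _; rewrite exchange_big /=.
apply: eq_bigr => i _; apply: eq_bigr => j _.
rewrite -exprM (mulnC _ (p ^ l)%N) exprMn add1n exprS.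
by rewrite mulrACA mulrC.
Qed.

Lemma EE_scale (a c : K) x y : EE (a *: x) (c *: y) =
  a * \sum_(k < m) ((\sum_(i < n) x 0 i * (y 0 i) ^+ (p ^ l * (p ^ r) ^ k)) *
     (\sum_(j < m) (b j) ^+ (1 + p ^ l * (p ^ r) ^ k))) * c ^+ (p ^ l * (p ^ r) ^ k).
Proof.
rewrite /EE mulr_sumr; apply: eq_bigr => k _.
set e := (p ^ l * (p ^ r) ^ k)%N.
have -> : \sum_(i < n) (a *: x) 0 i * (c *: y) 0 i ^+ e =
    a * c ^+ e * \sum_(i < n) x 0 i * y 0 i ^+ e.
  by rewrite mulr_sumr; apply: eq_bigr => i _; rewrite !mxE exprMn mulrACA.
by rewrite -!mulrA; congr (_ * _); rewrite mulrC -mulrA.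
Qed.

Lemma Tr_mul (a F : K) : TR (a * F) = \sum_(s < m) F ^+ ((p ^ r) ^ s) * a ^+ ((p ^ r) ^ s).
Proof. by rewrite /Tr; apply: eq_bigr => s _; rewrite exprMn mulrC. Qed.
End Main.

Theorem theorem6 (p r m n l : nat) (K : finFieldType)
  (Hp : prime p) (Hm : (1 <= m)%N) (Hn : (1 <= n)%N) (Hl : (l <= r - 1)%N)
  (Hr : (1 <= r)%N) (HK : #|K| = ((p ^ r) ^ m)%N)
  (C : {set 'rV[K]_n}) (HC : @scalable_code K n C)
  (g b : 'I_m -> K) (Hg : @is_basis K (p ^ r) m g)
  (Hb : @is_dual_basis K (p ^ r) m g b) :
  @self_orthogonal K (m * n) (@htilde K p l (m * n)) (@Im_code K (p ^ r) m n b C) <->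
  (forall x y, x \in C -> y \in C -> forall k : 'I_m,
     (\sum_(i < n) x 0 i * (y 0 i) ^+ (p ^ l * (p ^ r) ^ k)) *
     (\sum_(j < m) (b j) ^+ (1 + p ^ l * (p ^ r) ^ k)) = 0).
Proof.
have hpc : p \in [pchar K].
  by apply: (@card_finPcharP _ _ (r * m)%N) => //; rewrite HK expnM.
have hfix : forall z : K, z ^+ ((p ^ r) ^ m) = z by move=> z; rewrite -HK expf_card.
have p1 := prime_gt1 Hp.
have Q1 : (1 < p ^ r)%N by have := ltn_exp2l 0 r p1; rewrite expn0 => ->.
split.
- move=> HS x y hx hy k.
  have H1 : forall a c, @Tr K (p ^ r) m (EE K p r m n l b (a *: x) (c *: y)) = 0.
    move=> a c; rewrite -(@main_id K p r m n l hpc hfix b); apply: HS.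
      by exists (a *: x) => //; apply: HC.
    by exists (c *: y) => //; apply: HC.
  have H2 : forall c : K, \sum_(k < m)
     (\sum_(i < n) x 0 i * y 0 i ^+ (p ^ l * (p ^ r) ^ k)) *
     (\sum_(j < m) b j ^+ (1 + p ^ l * (p ^ r) ^ k)) * c ^+ (p ^ l * (p ^ r) ^ k) = 0.
    move=> c; set F := \sum_(k < m) _.
    have := @poly_lemma K m (fun s => F ^+ ((p ^ r) ^ s)) (fun s => ((p ^ r) ^ s)%N).
    move=> /(_ _ _ _ (Ordinal Hm)) /=; rewrite expr1; apply.
    + by move=> s1 s2 /(expnI Q1) /ord_inj.
    + by move=> s; rewrite HK ltn_exp2l.
    + by move=> a; have := H1 a c; rewrite EE_scale Tr_mul.
  have := @poly_lemma K m (fun k => (\sum_(i < n) x 0 i * y 0 i ^+ (p ^ l * (p ^ r) ^ k)) *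
     (\sum_(j < m) b j ^+ (1 + p ^ l * (p ^ r) ^ k))) (fun k => (p ^ l * (p ^ r) ^ k)%N).
  move=> /(_ _ _ _ k) /=; apply.
  + move=> k1 k2; rewrite -!expnM -!expnD => /(expnI p1) /eqP.
    by rewrite eqn_add2l eqn_pmul2l // => /eqP /ord_inj.
  + move=> k'; rewrite HK -!expnM -!expnD ltn_exp2l //.
    apply: (@leq_trans (r + r * k')); first by rewrite ltn_add2r; lia.
    by rewrite -mulnS leq_mul2l ltn_ord orbT.
  + exact: H2.
- move=> H u v [x hx ->] [y hy ->]; rewrite (@main_id K p r m n l hpc hfix b) /EE big1.
    rewrite /Tr big1 // => i _; rewrite expr0n.
    by have -> : ((p ^ r) ^ i == 0)%N = false by apply/negbTE; rewrite -lt0n !expn_gt0 prime_gt0.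
  by move=> k _; apply: H.
Qed.
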